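(* Let $N\ge1$ be an integer and $a\neq0$, $b\neq 0$ complex constants. Let $\big(z_1(\ell),\dots,z_N(\ell)\big)$, $\ell=0,1,2,\dots$, be a sequence of $N$-tuples of complex numbers such that for every $\ell\ge0$, writing $z_k=z_k(\ell)$ and $\tilde z_k=z_k(\ell+1)$, the numbers $z_1(\ell+2),\dots,z_N(\ell+2)$ are (in some order, with multiplicity) the $N$ roots in $z$ of the equation (polynomial of degree $N$ after clearing denominators) $$\sum_{k=1}^{N}\left\{\left(\frac{\tilde z_k-a z_k}{z-a\tilde z_k}\right)\left(\frac{1+b\tilde z_k}{1+b z_k}\right)\prod_{j=1,\,j\neq k}^{N}\left[\left(\frac{\tilde z_k-a z_j}{\tilde z_k-\tilde z_j}\right)\left(\frac{1+b\tilde z_j/a}{1+b z_j}\right)\right]\right\}=1.$$ Let $$v_m(0)=\frac{\prod_{j=1}^{N}\big(z_j(1)-a\,z_m(0)\big)}{\prod_{j=1,\,j\neq m}^{N}\big[a\,\big(z_j(0)-z_m(0)\big)\big]},\qquad [V(0)]_{nm}=\frac{v_m(0)}{1+b\,z_m(0)},\qquad n,m=1,\dots,N,$$ $U(0)=\mathrm{diag}\big(z_1(0),\dots,z_N(0)\big)$, $I$ the $N\times N$ identity, and $$U(\ell)=U(0)\,[aI+bV(0)]^{\ell}+V(0)\,[(a-1)I+bV(0)]^{-1}\big\{[aI+bV(0)]^{\ell}-I\big\}.$$ Then for every $\ell\ge0$ the multiset $\{z_1(\ell),\dots,z_N(\ell)\}$ coincides with the multiset of eigenvalues of $U(\ell)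$.
   Context: Throughout, data are assumed generic: for every $\ell$ the $z_n(\ell)$ are pairwise distinct, all denominators appearing are nonzero, and the matrix $(a-1)I+bV(0)$ is invertible. *)

(* Defs.v *)
From HB Require Import structures.
From mathcomp Require Import all_boot all_order all_algebra.
From mathcomp Require Import complex.
From mathcomp Require Import reals.
Set Implicit Arguments. Unset Strict Implicit. Unset Printing Implicit Defensive.
Import Order.TTheory GRing.Theory Num.Theory.
Local Open Scope ring_scope.

Section Defs.
Variables (R : realType) (n : nat).
Local Notation C := (R[i]).
Local Notation N := n.+1.

(* z l k = z_{k+1}(l), k : 'I_N *)
Implicit Types (a b : C) (z : nat -> 'I_N -> C).

Definition step_coef a b z (l : nat) (k : 'I_N) : C :=
  (z l.+1 k - a * z l k) * ((1 + b * z l.+1 k) / (1 + b * z l k)) *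
  \prod_(j < N | j != k)
     (((z l.+1 k - a * z l j) / (z l.+1 k - z l.+1 j)) *
      ((1 + b * z l.+1 j / a) / (1 + b * z l j))).

(* The equation  sum_k step_coef_k / (z - a zt_k) = 1,  after multiplication
   by prod_k (z - a zt_k), is  step_poly = 0, where *)
Definition step_poly a b z (l : nat) : {poly C} :=
  \prod_(k < N) ('X - (a * z l.+1 k)%:P)
  - \sum_(k < N) (step_coef a b z l k)%:P *
       \prod_(j < N | j != k) ('X - (a * z l.+1 j)%:P).

Definition v0 a b z (m : 'I_N) : C :=
  (\prod_(j < N) (z 1%N j - a * z 0%N m)) /
  (\prod_(j < N | j != m) (a * (z 0%N j - z 0%N m))).

Definition V0 a b z : 'M[C]_N := \matrix_(i < N, m < N) (v0 a b z m / (1 + b * z 0%N m)).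

Definition U0 z : 'M[C]_N := diag_mx (\row_(m < N) z 0%N m).

Definition Umat a b z (l : nat) : 'M[C]_N :=
  U0 z *m (a%:M + b *: V0 a b z) ^+ l
  + V0 a b z *m invmx ((a - 1)%:M + b *: V0 a b z)
      *m ((a%:M + b *: V0 a b z) ^+ l - 1%:M).

End Defs.

(* Main.v *)
Require Import Defs.
From HB Require Import structures.
From mathcomp Require Import all_boot all_order all_algebra.
From mathcomp Require Import complex reals.
Import Order.TTheory GRing.Theory Num.Theory.
Local Open Scope ring_scope.
From mathcomp Require Import ring.
Section L.
Context {F : numFieldType}.

Lemma char_poly_hornerE n (M : 'M[F]_n) x : (char_poly M).[x] = \det (x%:M - M).
Proof.
rewrite /char_poly -horner_evalE -det_map_mx; congr (determinant _).
apply/matrixP => i j; rewrite /char_poly_mx !mxE. idtac.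
rewrite /= horner_evalE hornerD hornerN hornerMn hornerX hornerC.
by [].
Qed.

Lemma poly_all0 (p : {poly F}) : (forall x, p.[x] = 0) -> p = 0.
Proof.
move=> H; apply/eqP; apply/negPn/negP => p0.
have := max_poly_roots p0 (rs := [seq i%:R | i <- iota 0 (size p)]).
rewrite size_map size_iota ltnn => /(_ _ _)/negP; apply => //.
  by apply/allP => y /mapP [i _ ->]; rewrite /root H.
rewrite map_inj_uniq ?iota_uniq //.
by move=> i j /eqP; rewrite eqr_nat => /eqP.
Qed.

Lemma poly_cofinite {p q r : {poly F}} : r != 0 ->
  (forall x, ~~ root r x -> p.[x] = q.[x]) -> p = q.
Proof.
move=> r0 H; apply/eqP; rewrite -subr_eq0; apply/eqP.
have : (p - q) * r = 0.
  apply: poly_all0 => x; rewrite hornerM hornerD hornerN.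
  case: (boolP (root r x)) => [/eqP -> | /H ->]; first by rewrite mulr0.
  by rewrite subrr mul0r.
by move/eqP; rewrite mulf_eq0 (negbTE r0) orbF => /eqP.
Qed.

Lemma det_rank1 n (p : 'cV[F]_n) (w : 'rV[F]_n) :
  \det (1%:M - p *m w) = 1 - (w *m p) 0 0.
Proof.
have E1 : block_mx (1%:M : 'M_1) w p 1%:M =
          block_mx 1%:M 0 p 1%:M *m block_mx 1%:M w 0 (1%:M - p *m w).
  by rewrite mulmx_block !mul1mx !mul0mx !mulmx1 !addr0 addrC subrK.
have E2 : block_mx (1%:M : 'M_1) w p 1%:M =
          block_mx 1%:M w 0 1%:M *m block_mx (1%:M - w *m p) 0 p 1%:M.
  by rewrite mulmx_block !mul1mx !mul0mx !mulmx1 ?addr0 ?add0r ?subrK.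
have := congr1 determinant E1; rewrite E2 !det_mulmx det_lblock det_ublock.
rewrite det_lblock det_ublock !det1 !mul1r mulr1 => <-.
by rewrite det_mx11 !mxE.
Qed.

Lemma MDL n (M : 'M[F]_n) (u : 'cV_n) (w : 'rV_n) : M \in unitmx ->
  \det (M - u *m w) = \det M * (1 - (w *m invmx M *m u) 0 0).
Proof.
move=> Mu.
have -> : M - u *m w = M *m (1%:M - (invmx M *m u) *m w).
  by rewrite mulmxBr mulmx1 !mulmxA mulmxV // mul1mx.
by rewrite det_mulmx det_rank1 mulmxA.
Qed.
End L.
Section G.
Context {F : numFieldType}.

Lemma interp m (p q : {poly F}) (x : 'I_m -> F) : injective x ->
  p \is monic -> q \is monic -> size p = m.+1 -> size q = m.+1 ->
  (forall k, p.[x k] = q.[x k]) -> p = q.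
Proof.
move=> xi pm qm sp sq H; apply/eqP; rewrite -subr_eq0; apply/negPn/negP => pq.
have Hs : (size (p - q)%R <= m)%N.
  apply/leq_sizeP => j; rewrite leq_eqVlt => /orP [/eqP <- | hj].
    move/monicP: pm; move/monicP: qm; rewrite !lead_coefE sp sq /= coefB.
    by move=> -> ->; rewrite subrr.
  by rewrite coefB !nth_default ?subrr // ?sp ?sq.
have := max_poly_roots pq (rs := [seq x k | k <- enum 'I_m]).
rewrite size_map -cardE card_ord => /(_ _ _)/negP; apply.
- by apply/allP => y /mapP [k _ ->]; rewrite /root hornerD hornerN H subrr.
- by rewrite map_inj_uniq ?enum_uniq.
- by rewrite ltnNge Hs.
Qed.

Lemma D0E n (Y : 'M[F]_n) (r : 'I_n -> F) (a s : F) : a != 0 ->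
  char_poly Y = \prod_j ('X - (r j)%:P) ->
  \det (s%:M - a *: Y) = \prod_j (s - a * r j).
Proof.
move=> a0 HY.
have -> : s%:M - a *: Y = a *: ((s / a)%:M - Y).
  by rewrite scalerBr scale_scalar_mx mulrC divfK.
rewrite detZ.
have := congr1 (fun p => p.[s / a]) HY; rewrite /= char_poly_hornerE => ->.
rewrite horner_prod -[X in a ^+ X](card_ord n) -prodrMl; apply: eq_bigr => j _.
by rewrite hornerD hornerN hornerX hornerC mulrBr mulrC divfK.
Qed.
End G.

Lemma scalarA (F : fieldType) (a b c s D0 D1 E2 phi psi chi k : F) : a != 0 ->
 D1 = D0 * (1 - phi) -> phi = psi + b * chi -> a * chi = s * psi - c ->
 E2 = k * D0 * (1 - a^-1 * (psi + b * (a * chi + phi * c) + a * phi)) ->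
 a * (a + b * s) * E2 =
 k * ((a + b * s) * (a * D0 - (a + a + b * c) * (D0 - D1)) - (1 - a) * (a * (D0 - D1) + b * c * D0)).
Proof.
move=> a0 -> -> Hc ->.
have -> : c = s * psi - a * chi by rewrite Hc opprB addrC subrK.
by field.
Qed.

Lemma scalarA2 (F : fieldType) (a b c s D0 D1 E2 phi psi chi k d0 d1 e2 : F) : a != 0 ->
 D1 = D0 * (1 - phi) -> phi = psi + b * chi -> a * chi = s * psi - c ->
 E2 = k * D0 * (1 - a^-1 * (psi + b * (a * chi + phi * c) + a * phi)) ->
 D0 = d0 -> D1 = d1 -> E2 = e2 ->
 a * (a + b * s) * e2 =
 k * ((a + b * s) * (a * d0 - (a + a + b * c) * (d0 - d1)) - (1 - a) * (a * (d0 - d1) + b * c * d0)).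
Proof.
move=> a0 h1 h2 h3 h4 <- <- <-; exact: (@scalarA F _ _ _ _ _ _ _ _ _ _ _ a0 h1 h2 h3 h4).
Qed.

Lemma scalarC2 (F : fieldType) (a b c s D0 D1 phi psi chi d0 d1 : F) : b != 0 ->
 s = - (a / b) -> D1 = D0 * (1 - phi) -> phi = psi + b * chi -> a * chi = s * psi - c ->
 D0 = d0 -> D1 = d1 -> a * d1 = d0 * (a + b * c).
Proof.
move=> b0 -> -> -> Hc <- <-.
have -> : c = - (a / b) * psi - a * chi by rewrite Hc opprB addrC subrK.
by field.
Qed.

Lemma scalarC (F : fieldType) (a b c s D0 D1 phi psi chi : F) : b != 0 ->
 s = - (a / b) -> D1 = D0 * (1 - phi) -> phi = psi + b * chi -> a * chi = s * psi - c ->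
 a * D1 = D0 * (a + b * c).
Proof.
move=> b0 -> -> -> Hc.
have -> : c = - (a / b) * psi - a * chi by rewrite Hc opprB addrC subrK.
by field.
Qed.
Lemma final_nd (F : fieldType) (a b c zt E D0 D1 D0s D1s Pz Pt SC k kk : F) :
 a != 0 -> a + b * zt != 0 -> D0s != 0 -> Pz != 0 -> kk = a * k -> D1 = 0 ->
 a * (a + b * zt) * E = kk * ((a + b * zt) * (a * D0 - (a + a + b * c) * (D0 - D1))
      - (1 - a) * (a * (D0 - D1) + b * c * D0)) ->
 a * D1s = D0s * (a + b * c) ->
 SC * Pz = k * (1 + b * zt) * D0 * Pt ->
 D1s * Pz = D0s * (1 + b * zt / a) * Pt ->
 E = - SC.
Proof.
move=> a0 az D0s0 Pz0 -> -> h1 h2 h3 h4.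
have hSC : SC = k * (1 + b * zt) * D0 * Pt / Pz by rewrite -h3 mulfK.
have hD1 : D1s = D0s * (1 + b * zt / a) * Pt / Pz by rewrite -h4 mulfK.
have hc : b * c = a * D1s / D0s - a.
  by rewrite h2; field.
have aaz : a * (a + b * zt) != 0 by rewrite mulf_neq0.
apply: (mulfI aaz); rewrite h1 hSC hc hD1.
by field; repeat (apply/andP; split).
Qed.

Lemma final_d (F : fieldType) (a b zt zz E Qk Pz' D0' Pt SC k kk : F) :
 a != 0 -> b != 0 -> 1 + b * zz != 0 -> Pz' != 0 -> kk = a * k ->
 zt = - (a / b) ->
 a * b * E = kk * a * (1 + b * zt) * Qk ->
 SC * ((1 + b * zz) * Pz') = k * (1 + b * zt) * ((zt - a * zz) * D0') * Pt ->
 Qk * Pz' = D0' * Pt ->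
 E = - SC.
Proof.
move=> a0 b0 bz0 Pz0 -> hzt h1 h3 h4.
have hSC : SC = k * (1 + b * zt) * ((zt - a * zz) * D0') * Pt / ((1 + b * zz) * Pz').
  by rewrite -h3 mulfK // mulf_neq0.
have hE : E = a * k * a * (1 + b * zt) * Qk / (a * b).
  by rewrite -h1 mulrC mulKf // mulf_neq0.
have hQ : Qk = D0' * Pt / Pz' by rewrite -h4 mulfK.
rewrite hSC hE hQ hzt.
by field; repeat (apply/andP; split).
Qed.

Section M.
Variables (R : realType) (n : nat) (a b : R[i]) (z : nat -> 'I_n.+1 -> R[i]).
Local Notation C := (R[i]).
Local Notation N := n.+1.
Definition ee : 'cV[C]_N := const_mx 1.
Definition ww : 'rV[C]_N := \row_m (v0 a b z m / (1 + b * z 0%N m)).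
Definition AA : 'M[C]_N := a%:M + b *: V0 a b z.

Lemma V0E : V0 a b z = ee *m ww.
Proof. by apply/matrixP => i j; rewrite !mxE big_ord1 !mxE mul1r. Qed.

Lemma Umat_rec l : ((a - 1)%:M + b *: V0 a b z) \in unitmx ->
  Umat a b z l.+1 = Umat a b z l *m AA + V0 a b z.
Proof.
move=> Bu; rewrite /Umat -/AA.
set B := (a - 1)%:M + b *: V0 a b z.
have AB : AA = B + 1%:M by rewrite /AA /B raddfB /= addrAC subrK.
rewrite !mulmxE.
set Bi := invmx B; set U := U0 z; set V := V0 a b z.
have BiB : Bi * B = 1%:M by exact: (mulVmx Bu).
rewrite mulrDl exprSr mulrA -addrA; congr (_ + _).
have -> : AA ^+ l * AA - 1%:M = (AA ^+ l - 1%:M) * AA + B.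
  by rewrite mulrBl mul1r -addrA; congr (_ + _); rewrite AB opprD addrAC addNr add0r.
by rewrite mulrDr mulrA -(mulrA V Bi B) BiB; congr (_ + _); exact: mulmx1.
Qed.


Lemma stepE (Y : 'M[C]_N) :
  Y *m AA + V0 a b z = a *: Y + (ee + b *: (Y *m ee)) *m ww.
Proof.
rewrite /AA V0E mulmxDr mul_mx_scalar -scalemxAr mulmxA mulmxDl addrC.
by rewrite -scalemxAl addrCA.
Qed.

Definition cc : C := (ww *m ee) 0 0.
Definition fl (M : 'M[C]_N) (X : 'cV[C]_N) : C := (ww *m M *m X) 0 0.

Lemma flD M X Y : fl M (X + Y) = fl M X + fl M Y.
Proof. by rewrite /fl mulmxDr mxE. Qed.
Lemma flZ M k X : fl M (k *: X) = k * fl M X.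
Proof. by rewrite /fl -scalemxAr mxE. Qed.
Lemma fl11 M X (K : 'M[C]_1) : fl M (X *m K) = fl M X * K 0 0.
Proof. by rewrite /fl mulmxA [in LHS]mxE big_ord1. Qed.


Definition uu (Y : 'M[C]_N) : 'cV[C]_N := ee + b *: (Y *m ee).
Definition nx (Y : 'M[C]_N) : 'M[C]_N := a *: Y + uu Y *m ww.

Lemma nxE Y : Y *m AA + V0 a b z = nx Y.
Proof. exact: stepE. Qed.

Section LayerA.
Variables (Y : 'M[C]_N) (s : C).
Let M := s%:M - a *: Y.
Let Mi := invmx M.
Hypothesis Mu : M \in unitmx.
Hypothesis a0 : a != 0.
Let phi := fl Mi (uu Y).
Let psi := fl Mi ee.
Let chi := fl Mi (Y *m ee).

Lemma A1 : \det (s%:M - nx Y) = \det M * (1 - phi).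
Proof. by rewrite -MDL // /nx opprD addrA. Qed.

Lemma A2 : phi = psi + b * chi.
Proof. by rewrite /phi /uu flD flZ. Qed.

Lemma A3 : a * chi = s * psi - cc.
Proof.
rewrite /chi -flZ /fl scalemxAl.
have -> : a *: Y = s%:M - M by rewrite /M opprB addrC subrK.
rewrite [ww *m Mi *m _]mulmxA -(mulmxA ww) mulmxBr mulVmx // mul_mx_scalar.
rewrite mulmxBr mulmx1 mulmxBl mxE -scalemxAr -scalemxAl mxE.
by rewrite [X in _ + X = _]mxE.
Qed.

Lemma A4 : \det ((a * s)%:M - nx (nx Y)) =
  a ^+ N * \det M * (1 - a^-1 * (psi + b * (a * chi + phi * cc) + a * phi)).
Proof.
have E (U U1 : 'cV[C]_N) : (a * s)%:M - (a *: (a *: Y + U *m ww) + U1 *m ww)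
     = a *: M - (a *: U + U1) *m ww.
  rewrite /M scalerBr scale_scalar_mx scalerDr scalerA mulmxDl scalemxAl.
  by rewrite !opprD !addrA.
rewrite {1}/nx {1}/nx E.
have aMu : a *: M \in unitmx by rewrite unitmxZ ?unitfE.
rewrite MDL // detZ invmxZ // -/Mi; congr (_ * (1 - _)).
rewrite -scalemxAr -scalemxAl mxE; congr (_ * _).
rewrite -/(fl Mi _) flD flZ addrC; congr (_ + _).
rewrite {1}/uu flD flZ; congr (_ + b * _).
by rewrite /nx mulmxDl -scalemxAl flD flZ -mulmxA fl11.
Qed.
End LayerA.


Definition D0p l : {poly C} := \prod_j ('X - (a * z l j)%:P).
Definition D1p l : {poly C} := \prod_j ('X - (z l.+1 j)%:P).
Definition PL l : {poly C} :=
  (a%:P + b%:P * 'X) * (a%:P * D0p l - (a + a + b * cc)%:P * (D0p l - D1p l))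
  - (1 - a)%:P * (a%:P * (D0p l - D1p l) + (b * cc)%:P * D0p l).

Lemma PA (Y : 'M[C]_N) l : a != 0 ->
  char_poly Y = \prod_j ('X - (z l j)%:P) ->
  char_poly (nx Y) = \prod_j ('X - (z l.+1 j)%:P) ->
  a%:P * (a%:P + b%:P * 'X) * (char_poly (nx (nx Y)) \Po (a%:P * 'X)) =
  (a ^+ N)%:P * PL l.
Proof.
move=> a0 HY HY1.
have D0n : D0p l != 0 by rewrite monic_neq0 // monic_prod_XsubC.
apply: (poly_cofinite D0n) => x Hx.
have dM : \det (x%:M - a *: Y) = (D0p l).[x].
  by rewrite (@D0E _ _ Y (z l) a x a0 HY) /D0p horner_prod; apply: eq_bigr => j _; rewrite hornerXsubC.
have Mu : (x%:M - a *: Y) \in unitmx by rewrite unitmxE unitfE dM.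
have dM1 : \det (x%:M - nx Y) = (D1p l).[x] by rewrite -char_poly_hornerE HY1.
have := @scalarA2 _ _ _ _ _ _ _ _ _ _ _ _ _ _ _ a0 (A1 Y x Mu) (A2 Y x) (A3 Y x Mu) (A4 Y x Mu a0)
  dM dM1 (esym (char_poly_hornerE _ (nx (nx Y)) (a * x))).
move=> H.
rewrite /PL.
rewrite !(hornerM, hornerD, hornerN, hornerC, hornerX, horner_comp).
exact: H.
Qed.
Lemma D0p_s0 l : a != 0 -> b != 0 -> (forall j, 1 + b * z l j != 0) ->
  (D0p l).[- (a / b)] != 0.
Proof.
move=> a0 b0 Hb; rewrite /D0p horner_prod; apply/prodf_neq0 => j _.
rewrite hornerXsubC.
have -> : - (a / b) - a * z l j = - (a / b) * (1 + b * z l j) by field.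
by rewrite mulf_neq0 // oppr_eq0 mulf_neq0 // invr_eq0.
Qed.

Lemma CR (Y : 'M[C]_N) l : a != 0 -> b != 0 ->
  char_poly Y = \prod_j ('X - (z l j)%:P) ->
  char_poly (nx Y) = \prod_j ('X - (z l.+1 j)%:P) ->
  (forall j, 1 + b * z l j != 0) ->
  a * (D1p l).[- (a / b)] = (D0p l).[- (a / b)] * (a + b * cc).
Proof.
move=> a0 b0 HY HY1 Hb.
set x := - (a / b).
have dM : \det (x%:M - a *: Y) = (D0p l).[x].
  by rewrite (@D0E _ _ Y (z l) a x a0 HY) /D0p horner_prod; apply: eq_bigr => j _; rewrite hornerXsubC.
have Mu : (x%:M - a *: Y) \in unitmx by rewrite unitmxE unitfE dM D0p_s0.
have dM1 : \det (x%:M - nx Y) = (D1p l).[x] by rewrite -char_poly_hornerE HY1.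
exact: (@scalarC2 _ _ _ _ _ _ _ _ _ _ _ _ b0 erefl (A1 Y x Mu) (A2 Y x) (A3 Y x Mu) dM dM1).
Qed.
Lemma SPeval l k : (step_poly a b z l).[a * z l.+1 k] =
  - (step_coef a b z l k * \prod_(j < N | j != k) (a * z l.+1 k - a * z l.+1 j)).
Proof.
rewrite /step_poly hornerD hornerN horner_prod.
rewrite [\prod_(j < N) _](bigD1 k) //= hornerXsubC subrr mul0r add0r.
rewrite horner_sum [\sum_(i < N) _](bigD1 k) //= [X in _ + X]big1 ?addr0.
  by rewrite hornerM hornerC horner_prod; congr (- (_ * _)); apply: eq_bigr => j _; rewrite hornerXsubC.
move=> m mk; rewrite hornerM horner_prod (bigD1 k) 1?eq_sym //= hornerXsubC subrr.
by rewrite mul0r mulr0.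
Qed.

Lemma pmK k (x : C) f : \prod_(j < N | j != k) (x * f j) = x ^+ n * \prod_(j < N | j != k) f j.
Proof. by rewrite big_split /= prodr_const cardC1 card_ord. Qed.

Lemma PI1 l k : a != 0 -> injective (z l.+1) -> (forall j, 1 + b * z l j != 0) ->
  step_coef a b z l k * \prod_(j < N | j != k) (a * z l.+1 k - a * z l.+1 j)
    * ((1 + b * z l k) * \prod_(j < N | j != k) (1 + b * z l j))
  = a ^+ n * (1 + b * z l.+1 k) *
    ((z l.+1 k - a * z l k) * \prod_(j < N | j != k) (z l.+1 k - a * z l j)) *
    \prod_(j < N | j != k) (1 + b * z l.+1 j / a).
Proof.
move=> a0 Hi Hb.
rewrite /step_coef.
have E : \prod_(j < N | j != k)
     (((z l.+1 k - a * z l j) / (z l.+1 k - z l.+1 j)) *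
      ((1 + b * z l.+1 j / a) / (1 + b * z l j))) *
   \prod_(j < N | j != k) (a * z l.+1 k - a * z l.+1 j) *
   \prod_(j < N | j != k) (1 + b * z l j) =
   \prod_(j < N | j != k) (a * ((z l.+1 k - a * z l j) * (1 + b * z l.+1 j / a))).
  rewrite -!big_split /=; apply: eq_bigr => j jk.
  have h1 : z l.+1 k - z l.+1 j != 0.
    by rewrite subr_eq0; apply/eqP => /Hi /eqP; rewrite eq_sym (negbTE jk).
  have h2 := Hb j.
  by field; rewrite a0 h1 h2.
rewrite pmK [X in _ = _ * X]big_split /= in E.
move: E.
set PF := \prod_(j < N | j != k) (_ / _ * _).
set PA := \prod_(j < N | j != k) (_ - _).
set PZ := \prod_(j < N | j != k) (1 + _).
set PD := \prod_(j < N | j != k) (z l.+1 k - _).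
set Pt := \prod_(j < N | j != k) (1 + _ / a).
move=> E.
have hk := Hb k.
transitivity ((z l.+1 k - a * z l k) * ((1 + b * z l.+1 k) / (1 + b * z l k)) * (1 + b * z l k)
   * (PF * PA * PZ)); first by ring.
rewrite E.
by field.
Qed.

Lemma PW (P : pred 'I_N) l : a != 0 -> b != 0 ->
  \prod_(j < N | P j) (- (a / b) - z l.+1 j) * \prod_(j < N | P j) (1 + b * z l j) =
  \prod_(j < N | P j) (- (a / b) - a * z l j) * \prod_(j < N | P j) (1 + b * z l.+1 j / a).
Proof.
move=> a0 b0; rewrite -!big_split; apply: eq_bigr => j _ /=.
by field; repeat (apply/andP; split).
Qed.

Lemma D0split l k x : (D0p l).[x] = (x - a * z l k) * \prod_(j < N | j != k) (x - a * z l j).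
Proof.
rewrite /D0p horner_prod (bigD1 k) //= hornerXsubC; congr (_ * _).
by apply: eq_bigr => j _; rewrite hornerXsubC.
Qed.

Lemma D1eval l x : (D1p l).[x] = \prod_j (x - z l.+1 j).
Proof. by rewrite /D1p horner_prod; apply: eq_bigr => j _; rewrite hornerXsubC. Qed.

Lemma D0eval l x : (D0p l).[x] = \prod_j (x - a * z l j).
Proof. by rewrite /D0p horner_prod; apply: eq_bigr => j _; rewrite hornerXsubC. Qed.

Lemma Pzsplit l k : \prod_j (1 + b * z l j) = (1 + b * z l k) * \prod_(j < N | j != k) (1 + b * z l j).
Proof. by rewrite (bigD1 k). Qed.

Lemma step (Y : 'M[C]_N) l : a != 0 -> b != 0 ->
  char_poly Y = \prod_j ('X - (z l j)%:P) ->
  char_poly (nx Y) = \prod_j ('X - (z l.+1 j)%:P) ->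
  (forall j, 1 + b * z l j != 0) -> injective (z l.+1) ->
  step_poly a b z l = \prod_k ('X - (z l.+2 k)%:P) ->
  char_poly (nx (nx Y)) = \prod_k ('X - (z l.+2 k)%:P).
Proof.
move=> a0 b0 HY HY1 Hb Hi Hs.
have xi : injective (fun k => a * z l.+1 k) by move=> i j /(mulfI a0) /Hi.
apply: (@interp _ _ _ _ _ xi).
- exact: char_poly_monic.
- exact: monic_prod_XsubC.
- by rewrite size_char_poly.
- by rewrite size_prod_XsubC -(filter_predT (index_enum _)) deprecated_filter_index_enum -cardE card_ord.
move=> k; rewrite -Hs SPeval.
have HPA := congr1 (fun p => p.[z l.+1 k]) (PA Y l a0 HY HY1).
move: HPA => /=.
rewrite /PL !(hornerM, hornerD, hornerN, hornerC, hornerX, horner_comp) => HPA.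
have D1z : (D1p l).[z l.+1 k] = 0.
  by rewrite D1eval (bigD1 k) //= subrr mul0r.
have PI := PI1 l k a0 Hi Hb.
have Pz0 : \prod_(j < N | j != k) (1 + b * z l j) != 0 by apply/prodf_neq0 => j _.
rewrite (D0split _ k) in HPA.
case: (eqVneq (a + b * z l.+1 k) 0) => az; last first.
  have FP : (D1p l).[- (a / b)] * ((1 + b * z l k) * \prod_(j < N | j != k) (1 + b * z l j))
      = (D0p l).[- (a / b)] * (1 + b * z l.+1 k / a) * \prod_(j < N | j != k) (1 + b * z l.+1 j / a).
    have := PW (fun _ => true) l a0 b0.
    rewrite D1eval D0eval -Pzsplit => ->.
    by rewrite [\prod_j (1 + b * z l.+1 j / a)](bigD1 k) //= mulrA.
  have PzN : (1 + b * z l k) * \prod_(j < N | j != k) (1 + b * z l j) != 0 by rewrite mulf_neq0.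
  exact: (@final_nd _ _ _ _ _ _ _ _ _ _ _ _ _ _ _ a0 az (D0p_s0 l a0 b0 Hb) PzN (exprS a n) D1z
     HPA (CR Y l a0 b0 HY HY1 Hb) PI FP).
have hzt : z l.+1 k = - (a / b).
  have -> : z l.+1 k = (a + b * z l.+1 k - a) / b by field.
  by rewrite az sub0r mulNr.
have D1s : (D1p l).[- (a / b)] = 0 by rewrite -hzt.
have hc : a + b * cc = 0.
  have := CR Y l a0 b0 HY HY1 Hb; rewrite D1s mulr0 => /esym/eqP.
  by rewrite mulf_eq0 (negbTE (D0p_s0 l a0 b0 Hb)) /= => /eqP.
have e1 : a + a + b * cc = a by rewrite -addrA hc addr0.
have e2 : b * cc = - a by apply/eqP; rewrite -addr_eq0 addrC hc.
set Qp := \prod_(j < N | j != k) ('X - (z l.+1 j)%:P).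
have D1split : D1p l = ('X - (z l.+1 k)%:P) * Qp by rewrite /D1p (bigD1 k).
have PLE : PL l = a%:P * (1 + b%:P * 'X) * D1p l.
  rewrite /PL e1 e2 polyCN polyCB; ring.
have e3 : a%:P + b%:P * 'X = b%:P * ('X - (z l.+1 k)%:P).
  by rewrite mulrBr -polyCM hzt mulrN (mulrC b) divfK // polyCN opprK addrC.
have HP := PA Y l a0 HY HY1.
rewrite PLE e3 D1split in HP.
set G := char_poly _ \Po _ in HP.
have HP2 : ('X - (z l.+1 k)%:P) * ((a%:P * b%:P) * G) =
           ('X - (z l.+1 k)%:P) * ((a ^+ N)%:P * a%:P * (1 + b%:P * 'X) * Qp).
  transitivity (a%:P * (b%:P * ('X - (z l.+1 k)%:P)) * G); first by ring.
  by rewrite HP; ring.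
have := mulfI _ HP2; rewrite polyXsubC_eq0 => /(_ isT) HP3.
have := congr1 (fun p => p.[z l.+1 k]) HP3.
rewrite /G /= !(hornerM, hornerD, hornerC, hornerX, horner_comp, hornerE) => h1.
have QE : Qp.[z l.+1 k] = \prod_(j < N | j != k) (z l.+1 k - z l.+1 j).
  by rewrite /Qp horner_prod; apply: eq_bigr => j _; rewrite hornerXsubC.
rewrite QE in h1.
have h4 := PW (fun j => j != k) l a0 b0.
rewrite -hzt in h4.
exact: (@final_d _ _ _ _ _ _ _ _ _ _ _ _ _ a0 b0 (Hb k) Pz0 (exprS a n) hzt h1 PI h4).
Qed.



Lemma Umat0 : Umat a b z 0 = U0 z.
Proof. by rewrite /Umat !expr0 subrr mulmx0 addr0 mulmx1. Qed.

Lemma charU0 : char_poly (U0 z) = \prod_j ('X - (z 0%N j)%:P).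
Proof.
rewrite /U0 char_poly_trig ?diag_mx_is_trig //.
by apply: eq_bigr => j _; rewrite !mxE eqxx mulr1n.
Qed.

Definition Bp : {poly C} := D0p 0%N - \sum_m (v0 a b z m)%:P * \prod_(j < N | j != m) ('X - (a * z 0%N j)%:P).

Lemma charU1_Bp : a != 0 -> (forall j, 1 + b * z 0%N j != 0) -> char_poly (nx (U0 z)) = Bp.
Proof.
move=> a0 Hb.
have D0n : D0p 0%N != 0 by rewrite monic_neq0 // monic_prod_XsubC.
apply: (poly_cofinite D0n) => x Hx.
have dM : \det (x%:M - a *: U0 z) = (D0p 0%N).[x].
  by rewrite (@D0E _ _ (U0 z) (z 0%N) a x a0 charU0) D0eval.
have Mu : (x%:M - a *: U0 z) \in unitmx by rewrite unitmxE unitfE dM.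
rewrite char_poly_hornerE A1 // dM.
have dx m : x - a * z 0%N m != 0.
  by apply: contra Hx => /eqP h; rewrite /root D0eval (bigD1 m) //= h mul0r.
set d := \row_m (x - a * z 0%N m)^-1.
have ME : x%:M - a *: U0 z = diag_mx (\row_m (x - a * z 0%N m)).
  apply/matrixP => i j; rewrite !mxE; case: (eqVneq i j) => [->|ij]; first by rewrite !mulr1n.
  by rewrite !mulr0n mulr0 subrr.
have MiE : invmx (x%:M - a *: U0 z) = diag_mx d.
  have h : (x%:M - a *: U0 z) *m diag_mx d = 1%:M.
    rewrite ME mulmx_diag; apply/matrixP => i j; rewrite !mxE.
    case: (eqVneq i j) => [->|ij]; last by rewrite !mulr0n.
    by rewrite !mulr1n divff.
  by rewrite -[RHS]mul1mx -(mulVmx Mu) -mulmxA h mulmx1.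
rewrite /fl MiE mul_mx_diag mxE.
rewrite /Bp hornerD hornerN horner_sum mulrBr mulr1 mulr_sumr; congr (_ - _).
apply: eq_bigr => m _.
rewrite mxE /uu /U0 mul_diag_mx !mxE /ww /d ?mxE ?mulr1.
rewrite (D0split 0%N m x) hornerM hornerC horner_prod.
have -> : \prod_(j < N | j != m) ('X - (a * z 0%N j)%:P).[x] = \prod_(j < N | j != m) (x - a * z 0%N j).
  by apply: eq_bigr => j _; rewrite hornerXsubC.
have := Hb m; have := dx m.
move: (\prod_(j < N | j != m) (x - a * z 0%N j)) => P h1 h2.
by field; repeat (apply/andP; split).
Qed.
Lemma charU1 : a != 0 -> injective (z 0%N) -> (forall j, 1 + b * z 0%N j != 0) ->
  char_poly (nx (U0 z)) = \prod_j ('X - (z 1%N j)%:P).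
Proof.
move=> a0 Hi Hb.
have xi : injective (fun k => a * z 0%N k) by move=> i j /(mulfI a0) /Hi.
apply: (@interp _ _ _ _ _ xi).
- exact: char_poly_monic.
- exact: monic_prod_XsubC.
- by rewrite size_char_poly.
- by rewrite size_prod_XsubC -(filter_predT (index_enum _)) deprecated_filter_index_enum -cardE card_ord.
move=> k; rewrite charU1_Bp //= /Bp hornerD hornerN (D0split 0%N k) subrr mul0r add0r.
rewrite horner_sum [\sum_(i < N) _](bigD1 k) //= [X in _ + X]big1 ?addr0; last first.
  move=> m mk; rewrite hornerM horner_prod (bigD1 k) 1?eq_sym //= hornerXsubC subrr.
  by rewrite mul0r mulr0.
rewrite hornerM hornerC horner_prod [in RHS]horner_prod.
have -> : \prod_(j < N | j != k) ('X - (a * z 0%N j)%:P).[a * z 0%N k] =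
          \prod_(j < N | j != k) - (a * (z 0%N j - z 0%N k)).
  by apply: eq_bigr => j _; rewrite hornerXsubC mulrBr opprB.
have -> : \prod_j ('X - (z 1%N j)%:P).[a * z 0%N k] = \prod_j - (z 1%N j - a * z 0%N k).
  by apply: eq_bigr => j _; rewrite hornerXsubC opprB.
rewrite !prodrN cardC1 card_ord /v0.
have Dn : \prod_(j < N | j != k) (a * (z 0%N j - z 0%N k)) != 0.
  apply/prodf_neq0 => j jk; rewrite mulf_neq0 // subr_eq0.
  by apply/eqP => /Hi /eqP; rewrite (negbTE jk).
move: Dn; move: (\prod_(j < N | j != k) (a * (z 0%N j - z 0%N k))) => D Dn.
rewrite exprS.
by field.
Qed.
End M.

Theorem proposition2p2p1 (R : realType) (n : nat) (a b : R[i])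
  (z : nat -> 'I_n.+1 -> R[i]) :
  a != 0 -> b != 0 ->
  (forall l, injective (z l)) ->
  (forall l k, 1 + b * z l k != 0) ->
  (forall l k j, z l.+2 j - a * z l.+1 k != 0) ->
  ((a - 1)%:M + b *: V0 a b z) \in unitmx ->
  (forall l, step_poly a b z l = \prod_(k < n.+1) ('X - (z l.+2 k)%:P)) ->
  forall l, char_poly (Umat a b z l) = \prod_(k < n.+1) ('X - (z l k)%:P).
Proof.
move=> a0 b0 Hi Hb _ Bu Hs.
have rec l : Umat a b z l.+1 = nx R n a b z (Umat a b z l).
  by rewrite (Umat_rec R n a b z l Bu) nxE.
suff H : forall l, char_poly (Umat a b z l) = \prod_(k < n.+1) ('X - (z l k)%:P) /\
                   char_poly (Umat a b z l.+1) = \prod_(k < n.+1) ('X - (z l.+1 k)%:P).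
  by move=> l; case: (H l).
elim => [|l [IH1 IH2]].
  split; first by rewrite (Umat0 R n a b z) (charU0 R n z).
  by rewrite rec (Umat0 R n a b z) (charU1 R n a b z a0 (Hi 0%N) (Hb 0%N)).
split => //.
rewrite rec in IH2.
by rewrite !rec (step R n a b z (Umat a b z l) l a0 b0 IH1 IH2 (Hb l) (Hi l.+1) (Hs l)).
Qed.
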